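(* In the two-period, two-sequence crossover design ($\mathcal{S}^{\mathrm{obs}}=\{AB,BA\}$, $N_{AB},N_{BA}\ge1$) under complete randomization, suppose Assumption 1 holds and Assumption 2 holds with $k=1$, so that $\tau_2:=\tau_2(A)=\tau_2(B)$. Then the only unbiased linear estimator of $\tau_1$ is $\widehat Y_1(AB)-\widehat Y_1(BA)$, and the only unbiased linear estimator of $\tau_2$ is $\widehat Y_2(BA)-\widehat Y_2(AB)$.
   Context: Setup: $N$ units, treatments $A,B$, $T$ periods; sequences $\vec z\in\{A,B\}^T$, $\vec z_{[t_1,t_2]}=z_{t_1}\cdots z_{t_2}$. Complete randomization with fixed positive group sizes $N_{\vec z}$, $\vec z\in\mathcal{S}^{\mathrm{obs}}$. Fixed potential outcomes $Y_{it}(\vec z)$ for all $\vec z\in\{A,B\}^T$; observed $Y_{it}=Y_{it}(\vec Z_i)$; randomness only from assignment. $\bar Y_t(\vec z)=N^{-1}\sum_iY_{it}(\vec z)$, $\widehat Y_t(\vec z)=N_{\vec z}^{-1}\sum_iY_{it}\mathbf1(\vec Z_i=\vec z)$. Assumption 1: $Y_{it}(\vec z)=Y_{it}(\vec z')$ whenever $\vec z_{[1,t]}=\vec z'_{[1,t]}$. Assumption 2 (order $k$): $Y_{it}(\vec z)=Y_{it}(\vec z')$ whenever $\vec z_{[\max(1,t-k+1),t]}=\vec z'_{[\max(1,t-k+1),t]}$. Estimands: $\tau_1=\bar Y_1(A)-\bar Y_1(B)$, $\tau_2(z_1)=\bar Y_2(z_1A)-\bar Y_2(z_1B)$. A linear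 estimator is $\sum_{t}\sum_{\vec z\in\mathcal{S}^{\mathrm{obs}}}\tilde w_t(\vec z)\widehat Y_t(\vec z)$ with non-random weights; unbiased means its expectation equals the estimand for every finite population satisfying the stated assumptions. *)

(* Defs.v *)
From mathcomp Require Import all_boot all_order all_algebra.
Set Implicit Arguments. Unset Strict Implicit. Unset Printing Implicit Defensive.
Import Order.TTheory GRing.Theory Num.Theory.
Local Open Scope ring_scope.

Definition trtA : bool := true.
Definition trtB : bool := false.

Definition tseq (T : nat) := {ffun 'I_T -> bool}.

Definition seq2 (a b : bool) : tseq 2 :=
  [ffun s : 'I_2 => if val s == 0%N then a else b].
Definition sAA := seq2 trtA trtA.
Definition sAB := seq2 trtA trtB.
Definition sBA := seq2 trtB trtA.
Definition sBB := seq2 trtB trtB.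

Definition per1 : 'I_2 := ord0.
Definition per2 : 'I_2 := ord_max.

Definition potout (R : Type) (N T : nat) := 'I_N -> 'I_T -> tseq T -> R.

Definition assumption1 (R : Type) N T (Y : potout R N T) : Prop :=
  forall i (t : 'I_T) (z z' : tseq T),
    (forall s : 'I_T, (s <= t)%N -> z s = z' s) -> Y i t z = Y i t z'.

(* Assumption 2 of order k: Y_it(z) = Y_it(z') when z and z' agree on the
   window [max(1,t-k+1), t]; with 0-based s,t this is s <= t < s + k. *)
Definition assumption2 (R : Type) N T (k : nat) (Y : potout R N T) : Prop :=
  forall i (t : 'I_T) (z z' : tseq T),
    (forall s : 'I_T, (s <= t)%N -> (t < s + k)%N -> z s = z' s) ->
    Y i t z = Y i t z'.

Definition cr_assignments N T (Sobs : seq (tseq T)) (n : tseq T -> nat)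
  : {set {ffun 'I_N -> tseq T}} :=
  [set Z : {ffun 'I_N -> tseq T} |
     [forall i, Z i \in Sobs] && all (fun z => #|[set i | Z i == z]| == n z) Sobs].

Definition cr_expect (R : fieldType) N T (Sobs : seq (tseq T)) (n : tseq T -> nat)
  (f : {ffun 'I_N -> tseq T} -> R) : R :=
  (#|cr_assignments N Sobs n|%:R)^-1 *
    \sum_(Z in cr_assignments N Sobs n) f Z.

Definition Ybar (R : fieldType) N T (Y : potout R N T) (t : 'I_T) (z : tseq T) : R :=
  (N%:R)^-1 * \sum_(i < N) Y i t z.

Definition Yhat (R : fieldType) N T (n : tseq T -> nat) (Y : potout R N T)
  (Z : {ffun 'I_N -> tseq T}) (t : 'I_T) (z : tseq T) : R :=
  ((n z)%:R)^-1 * \sum_(i < N | Z i == z) Y i t (Z i).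

Definition lin_est (R : fieldType) N T (Sobs : seq (tseq T)) (n : tseq T -> nat)
  (w : 'I_T -> tseq T -> R) (Y : potout R N T) (Z : {ffun 'I_N -> tseq T}) : R :=
  \sum_(t < T) \sum_(z <- Sobs) w t z * Yhat n Y Z t z.

Definition Sobs_cross : seq (tseq 2) := [:: sAB; sBA].
Definition n_cross (nAB nBA : nat) (z : tseq 2) : nat :=
  if z == sAB then nAB else if z == sBA then nBA else 0%N.

(* Estimands (N = nAB + nBA units). Under Assumption 1, \bar Y_1(A) is
   \bar Y_1(z) for any z with z_1 = A; we take z = AA (resp. BB). *)
Definition tau1 (R : fieldType) N (Y : potout R N 2) : R :=
  Ybar Y per1 sAA - Ybar Y per1 sBB.
Definition tau2 (R : fieldType) N (z1 : bool) (Y : potout R N 2) : R :=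
  Ybar Y per2 (seq2 z1 trtA) - Ybar Y per2 (seq2 z1 trtB).

Definition unbiased_cross (R : fieldType) (nAB nBA : nat)
  (w : 'I_2 -> tseq 2 -> R) (tau : potout R (nAB + nBA) 2 -> R) : Prop :=
  forall Y : potout R (nAB + nBA) 2,
    assumption1 Y -> assumption2 1 Y ->
    cr_expect Sobs_cross (n_cross nAB nBA) (lin_est Sobs_cross (n_cross nAB nBA) w Y)
    = tau Y.

(* Main.v *)
Require Import Defs.
From mathcomp Require Import all_boot all_order all_algebra.
From mathcomp Require Import all_fingroup ring lra zify.
Set Implicit Arguments. Unset Strict Implicit. Unset Printing Implicit Defensive.
Import Order.TTheory GRing.Theory Num.Theory.
Local Open Scope ring_scope.


Section Gen.
Variables (N T : nat) (Sobs : seq (tseq T)) (n : tseq T -> nat).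
Local Notation C := (cr_assignments N Sobs n).

Definition cnt (i : 'I_N) z : nat := (\sum_(Z in C) (Z i == z))%N.

Definition swapZ (i j : 'I_N) (Z : {ffun 'I_N -> tseq T}) : {ffun 'I_N -> tseq T} :=
  [ffun k => Z (tperm i j k)].

Lemma swapZK i j : involutive (swapZ i j).
Proof. by move=> Z; apply/ffunP=> k; rewrite !ffunE tpermK. Qed.

Lemma swapZ_C i j Z : Z \in C -> swapZ i j Z \in C.
Proof.
rewrite !inE => /andP[/forallP HS /allP Hn]; apply/andP; split.
  by apply/forallP=> k; rewrite ffunE.
apply/allP=> z zS; have := Hn z zS.
suff -> : [set k | swapZ i j Z k == z] = (tperm i j) @^-1: [set k | Z k == z].
  by rewrite card_preimset //; apply: perm_inj.
by apply/setP=> k; rewrite !inE ffunE.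
Qed.

Lemma cnt_sym i j z : cnt i z = cnt j z.
Proof.
rewrite /cnt (reindex_inj (can_inj (swapZK i j))) /=.
apply: eq_big => Z.
  by apply/idP/idP => [/(swapZ_C i j)|/(swapZ_C i j)]; rewrite ?swapZK.
by move=> _; rewrite ffunE tpermL.
Qed.

Lemma cnt_sum z : z \in Sobs -> (\sum_(i < N) cnt i z = #|C| * n z)%N.
Proof.
move=> zS; rewrite /cnt exchange_big /= -sum_nat_const.
apply: eq_bigr => Z; rewrite inE => /andP[_ /allP /(_ z zS) /eqP <-].
rewrite -sum1_card [RHS]big_mkcond /=; apply: eq_bigr => k _; rewrite inE.
by case: eqP.
Qed.

Lemma cnt_val i z : z \in Sobs -> (N * cnt i z = #|C| * n z)%N.
Proof.
move=> zS; rewrite -(cnt_sum zS) (eq_bigr (fun _ => cnt i z)); last first.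
  by move=> k _; apply: cnt_sym.
by rewrite sum_nat_const card_ord.
Qed.

Lemma expect_lin (R : numFieldType) w (Y : potout R N T) :
  (0 < #|C|)%N -> (forall z, z \in Sobs -> (0 < n z)%N) -> (0 < N)%N ->
  cr_expect Sobs n (lin_est Sobs n w Y) =
  \sum_(t < T) \sum_(z <- Sobs) w t z * Ybar Y t z.
Proof.
move=> C0 n0 N0.
rewrite /cr_expect /lin_est exchange_big /= mulr_sumr; apply: eq_bigr => t _.
rewrite exchange_big /= mulr_sumr big_seq [RHS]big_seq; apply: eq_bigr => z zS.
rewrite /Yhat /Ybar -mulr_sumr -mulr_sumr.
have -> : \sum_(Z in C) \sum_(i < N | Z i == z) Y i t (Z i) =
          \sum_(i < N) Y i t z * (cnt i z)%:R.
  under eq_bigr => Z _ do rewrite big_mkcond /=.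
  rewrite exchange_big /=; apply: eq_bigr => i _.
  rewrite /cnt mulr_natr -sumrMnr; apply: eq_bigr => Z _.
  by rewrite mulrb; case: eqP => // ->.
have Hc : forall i, (cnt i z)%:R = (#|C|%:R * (n z)%:R / N%:R :> R).
  move=> i; have := cnt_val i zS => /(congr1 (fun m => m%:R : R)).
  rewrite !natrM => H; apply: (mulfI (_ : (N%:R : R) != 0)); [by rewrite pnatr_eq0 -lt0n | rewrite H; field; by rewrite pnatr_eq0 -lt0n].
under eq_bigr do rewrite Hc.
rewrite -mulr_suml.
have h1 : (#|C|%:R : R) != 0 by rewrite pnatr_eq0 -lt0n.
have h2 : ((n z)%:R : R) != 0 by rewrite pnatr_eq0 -lt0n n0.
have h3 : (N%:R : R) != 0 by rewrite pnatr_eq0 -lt0n.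
by field; rewrite h1 h2 h3.
Qed.
End Gen.

Lemma sAB_sBA : (sAB == sBA) = false.
Proof. by apply/eqP => /(congr1 (fun f : tseq 2 => f ord0)); rewrite !ffunE. Qed.

Lemma n_AB a b : n_cross a b sAB = a.
Proof. by rewrite /n_cross eqxx. Qed.
Lemma n_BA a b : n_cross a b sBA = b.
Proof. by rewrite /n_cross eq_sym sAB_sBA eqxx. Qed.

Lemma card_lt m k : #|[set x : 'I_(m + k) | (x < m)%N]| = m.
Proof.
have -> : [set x : 'I_(m + k) | (x < m)%N] = [set lshift k j | j : 'I_m].
  apply/setP => x; rewrite inE; apply/idP/imsetP => [xm|[j _ ->]] /=.
    by exists (Ordinal xm) => //; apply: val_inj.
  exact: ltn_ord.
by rewrite card_imset ?card_ord //; apply: lshift_inj.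
Qed.

Lemma card_ge m k : #|[set x : 'I_(m + k) | ~~ (x < m)%N]| = k.
Proof.
have := cardsC [set x : 'I_(m + k) | (x < m)%N].
rewrite card_lt card_ord.
have -> : ~: [set x : 'I_(m + k) | (x < m)%N] = [set x : 'I_(m + k) | ~~ (x < m)%N].
  by apply/setP => x; rewrite !inE.
lia.
Qed.

Lemma C_nonempty a b : (0 < #|cr_assignments (a + b) Sobs_cross (n_cross a b)|)%N.
Proof.
apply/card_gt0P.
exists [ffun k : 'I_(a + b) => if (k < a)%N then sAB else sBA].
rewrite inE; apply/andP; split.
  by apply/forallP => k; rewrite ffunE; case: ifP; rewrite !inE eqxx ?orbT.
rewrite /= n_AB n_BA andbT; apply/andP; split.
  rewrite -[X in _ == X](card_lt a b); apply/eqP; apply: eq_card => k.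
  by rewrite !inE ffunE; case: ifP => _; rewrite ?eqxx // eq_sym sAB_sBA.
rewrite -[X in _ == X](card_ge a b); apply/eqP; apply: eq_card => k.
by rewrite !inE ffunE; case: ifP => //; rewrite ?sAB_sBA ?eqxx.
Qed.

Lemma expect_cross (R : realFieldType) a b w (Y : potout R (a + b) 2) :
  (1 <= a)%N -> (1 <= b)%N ->
  cr_expect Sobs_cross (n_cross a b) (lin_est Sobs_cross (n_cross a b) w Y) =
  w per1 sAB * Ybar Y per1 sAB + w per1 sBA * Ybar Y per1 sBA +
  (w per2 sAB * Ybar Y per2 sAB + w per2 sBA * Ybar Y per2 sBA).
Proof.
move=> ha hb.
have hn : forall z, z \in Sobs_cross -> (0 < n_cross a b z)%N.
  by move=> z; rewrite !inE => /orP[] /eqP ->; rewrite ?n_AB ?n_BA.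
have hN : (0 < a + b)%N by lia.
rewrite (expect_lin _ _ (C_nonempty a b) hn hN).
rewrite big_ord_recr big_ord1 /= !big_cons big_nil !addr0.
have -> : (widen_ord (leqnSn 1) ord0) = per1 by apply: val_inj.
by rewrite big_nil addr0.
Qed.

Definition Yf (R : Type) N (f : 'I_2 -> bool -> R) : potout R N 2 :=
  fun i t z => f t (z t).

Lemma Yf_a1 (R : Type) N f : assumption1 (@Yf R N f).
Proof. by move=> i t z z' H; rewrite /Yf H. Qed.
Lemma Yf_a2 (R : Type) N f : assumption2 1 (@Yf R N f).
Proof. by move=> i t z z' H; rewrite /Yf H // addn1. Qed.

Lemma Ybar_Yf (R : realFieldType) N f t z : (0 < N)%N -> Ybar (@Yf R N f) t z = f t (z t).
Proof.
move=> N0; rewrite /Ybar /Yf sumr_const card_ord -(mulr_natl (f t (z t))) mulrA mulVf ?mul1r //.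
by rewrite pnatr_eq0 -lt0n.
Qed.

Lemma vals : [/\ sAB per1 = true, sAB per2 = false, sBA per1 = false & sBA per2 = true]
  /\ [/\ sAA per1 = true, sBB per1 = false, seq2 trtA trtA per2 = true & seq2 trtA trtB per2 = false].
Proof. by rewrite !ffunE. Qed.

Lemma Ybar_eq (R : fieldType) N (Y : potout R N 2) t z z' :
  (forall i, Y i t z = Y i t z') -> Ybar Y t z = Ybar Y t z'.
Proof. by move=> H; rewrite /Ybar; congr (_ * _); apply: eq_bigr => i _. Qed.

Theorem proposition5 (R : realFieldType) (nAB nBA : nat)
  (hAB : (1 <= nAB)%N) (hBA : (1 <= nBA)%N) :
  (forall w : 'I_2 -> tseq 2 -> R,
     @unbiased_cross R nAB nBA w (@tau1 R (nAB + nBA)) <->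
     [/\ w per1 sAB = 1, w per1 sBA = -1, w per2 sAB = 0 & w per2 sBA = 0])
  /\
  (forall w : 'I_2 -> tseq 2 -> R,
     @unbiased_cross R nAB nBA w (@tau2 R (nAB + nBA) trtA) <->
     [/\ w per1 sAB = 0, w per1 sBA = 0, w per2 sAB = -1 & w per2 sBA = 1]).
Proof.
have N0 : (0 < nAB + nBA)%N by lia.
have [[v1 v2 v3 v4] [v5 v6 v7 v8]] := vals.
pose ind (t0 : 'I_2) (b0 : bool) : 'I_2 -> bool -> R :=
  fun t b => if (t == t0) && (b == b0) then 1 else 0.
have E : forall w f, cr_expect Sobs_cross (n_cross nAB nBA)
      (lin_est Sobs_cross (n_cross nAB nBA) w (@Yf R (nAB + nBA) f)) =
    w per1 sAB * f per1 true + w per1 sBA * f per1 false +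
    (w per2 sAB * f per2 false + w per2 sBA * f per2 true).
  by move=> w f; rewrite expect_cross // !Ybar_Yf // v1 v2 v3 v4.
split=> w; split.
- move=> H.
  have := H _ (Yf_a1 (ind per1 true)) (Yf_a2 _).
  have := H _ (Yf_a1 (ind per1 false)) (Yf_a2 _).
  have := H _ (Yf_a1 (ind per2 false)) (Yf_a2 _).
  have := H _ (Yf_a1 (ind per2 true)) (Yf_a2 _).
  rewrite /tau1 !E !Ybar_Yf // v5 v6 /ind /=.
  rewrite !(mulr0,mulr1,add0r,addr0,subr0,sub0r,oppr0) => h1 h2 h3 h4; by split.
- move=> [h1 h2 h3 h4] Y a1 a2.
  have eq1 : forall z z' : tseq 2, z per1 = z' per1 -> Ybar Y per1 z = Ybar Y per1 z'.
    move=> z z' hz; apply: Ybar_eq => i; apply: a1 => s; rewrite leqn0 => /eqP s0.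
    by have -> : s = per1 by apply: val_inj.
  rewrite expect_cross // h1 h2 h3 h4 /tau1 (eq1 sAB sAA) ?v1 ?v5 // (eq1 sBA sBB) ?v3 ?v6 //.
  by rewrite !mul0r addr0 mul1r mulN1r addr0.
- move=> H.
  have := H _ (Yf_a1 (ind per1 true)) (Yf_a2 _).
  have := H _ (Yf_a1 (ind per1 false)) (Yf_a2 _).
  have := H _ (Yf_a1 (ind per2 false)) (Yf_a2 _).
  have := H _ (Yf_a1 (ind per2 true)) (Yf_a2 _).
  rewrite /tau2 !E !Ybar_Yf // v7 v8 /ind /=.
  rewrite !(mulr0,mulr1,add0r,addr0,subr0,sub0r,oppr0) => h1 h2 h3 h4; by split.
- move=> [h1 h2 h3 h4] Y a1 a2.
  have eq2 : forall z z' : tseq 2, z per2 = z' per2 -> Ybar Y per2 z = Ybar Y per2 z'.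
    move=> z z' hz; apply: Ybar_eq => i; apply: a2 => s _; rewrite addn1 ltnS => hs.
    have -> : s = per2 by apply: val_inj => /=; move: hs; rewrite /per2 /=; have := ltn_ord s; lia.
    exact: hz.
  rewrite expect_cross // h1 h2 h3 h4 /tau2 (eq2 sBA (seq2 trtA trtA)) ?v4 ?v7 //.
  rewrite (eq2 sAB (seq2 trtA trtB)) ?v2 ?v8 //.
  by rewrite !mul0r add0r mul1r mulN1r add0r addrC.
Qed.
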